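(* Let $m,n,L\ge 2$ be integers. If $\beta=(\pi_\ell)_{\ell=1}^L$, $\pi_\ell=(a_\ell,b_\ell,c_\ell,d_\ell)$, is a chainable architecture such that $\mathcal{B}^\beta$ consists of $m\times n$ matrices and contains at least one matrix all of whose entries are nonzero, then there exist positive integers $q_1,\dots,q_L$ with $m=\prod_{\ell=1}^Lq_\ell$, $p_1,\dots,p_L$ with $n=\prod_{\ell=1}^Lp_\ell$, and $r_1,\dots,r_{L-1}$ such that, with the convention $r_0=r_L=1$, for each $1\le\ell\le L$: $$a_\ell=\prod_{j=1}^{\ell-1}p_j,\quad d_\ell=\prod_{j=\ell+1}^Lq_j,\quad b_\ell=q_\ell r_{\ell-1},\quad c_\ell=p_\ell r_\ell.$$ Conversely, any architecture defined by these formulas from positive integers $p_\ell,q_\ell,r_\ell$ with $n=\prod_\ell p_\ell$ and $m=\prod_\ell q_\ell$ is chainable and $\mathcal{B}^\beta\subseteq\mathbb{R}^{m\times n}$ (real matrices) contains at least one matrix with all entries nonzero. Such an architecture is non-redundant if and only if $r_1<q_1$, $r_{L-1}<p_L$, and $\frac{1}{p_\ell}<\frac{r_\ell}{r_{\ell-1}}<q_\ell$ for all $2\le\ell\le L-1$.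
   Context: A pattern is a tuple $\pi=(a,b,c,d)$ of positive integers; $\mathbf{S}_\pi:=\mathbf{I}_a\otimes\mathbf{1}_{b\times c}\otimes\mathbf{I}_d\in\{0,1\}^{abd\times acd}$. A $\pi$-factor is a matrix of size $abd\times acd$ with support contained in that of $\mathbf{S}_\pi$. Patterns $\pi=(a,b,c,d),\pi'=(a',b',c',d')$ are chainable if $ac/a'=b'd'/d=:r(\pi,\pi')$ is an integer, $a\mid a'$, $d'\mid d$; a chainable pair is redundant if $r(\pi,\pi')\ge\min(b,c')$. An architecture $\beta=(\pi_\ell)_{\ell=1}^L$ is a sequence of patterns with $a_\ell c_\ell d_\ell=a_{\ell+1}b_{\ell+1}d_{\ell+1}$; it is chainable if every consecutive pair is chainable, and (if chainable) redundant if some consecutive pair is redundant. $\mathcal{B}^\beta:=\{\mathbf{X}_1\cdots\mathbf{X}_L:\mathbf{X}_\ell\text{ a }\pi_\ell\text{-factor}\}$. *)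

(* Defs.v *)
From HB Require Import structures.
From mathcomp Require Import all_boot all_order all_algebra.
From mathcomp Require Import reals.
Set Implicit Arguments. Unset Strict Implicit. Unset Printing Implicit Defensive.
Import Order.TTheory GRing.Theory Num.Theory.

Record pattern := Pattern { pa : nat; pb : nat; pc : nat; pd : nat }.

Definition pos_pattern (p : pattern) : bool :=
  [&& 0 < pa p, 0 < pb p, 0 < pc p & 0 < pd p].

(* S_pi = I_a (x) 1_{b x c} (x) I_d has size (abd) x (acd).  With the standard
   Kronecker index convention, row index i = (ia*b + ib)*d + id and column index
   j = (ja*c + jc)*d + jd, and S_pi i j = 1 iff ia = ja and id = jd. *)
Definition nrows (p : pattern) := pa p * pb p * pd p.
Definition ncols (p : pattern) := pa p * pc p * pd p.
Definition S_entry (p : pattern) (i j : nat) : bool :=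
  (i %/ (pb p * pd p) == j %/ (pc p * pd p)) && (i %% pd p == j %% pd p).

(* A pi-factor: a (abd) x (acd) real matrix (entries given by a function on
   indices; only indices i < abd, j < acd are meaningful) whose support is
   contained in that of S_pi. *)
Definition is_factor {R : realType} (p : pattern) (X : nat -> nat -> R) : Prop :=
  forall i j, i < nrows p -> j < ncols p -> X i j != 0%R -> S_entry p i j.

Definition is_architecture (L : nat) (beta : nat -> pattern) : Prop :=
  (forall l, 1 <= l <= L -> pos_pattern (beta l)) /\
  (forall l, 1 <= l < L -> ncols (beta l) = nrows (beta l.+1)).

Definition chainable_pair (p p' : pattern) : Prop :=
  exists r : nat, pa p * pc p = r * pa p' /\ pb p' * pd p' = r * pd p /\
                  (pa p %| pa p') /\ (pd p' %| pd p).

Definition ratio (p p' : pattern) : nat := (pa p * pc p) %/ pa p'.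

Definition redundant_pair (p p' : pattern) : Prop :=
  chainable_pair p p' /\ minn (pb p) (pc p') <= ratio p p'.

Definition chainable_arch (L : nat) (beta : nat -> pattern) : Prop :=
  forall l, 1 <= l < L -> chainable_pair (beta l) (beta l.+1).

Definition redundant_arch (L : nat) (beta : nat -> pattern) : Prop :=
  chainable_arch L beta /\ exists l, 1 <= l < L /\ redundant_pair (beta l) (beta l.+1).

Fixpoint chain_prod {R : realType} (beta : nat -> pattern)
    (X : nat -> nat -> nat -> R) (k : nat) : nat -> nat -> R :=
  match k with
  | 0 => fun i j => ((i == j)%:R)%R
  | k'.+1 => fun i j =>
      (\sum_(t < nrows (beta k'.+1)) chain_prod beta X k' i t * X k'.+1 t j)%R
  end.

Definition in_B {R : realType} (L : nat) (beta : nat -> pattern) (m n : nat)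
    (M : 'M[R]_(m, n)) : Prop :=
  exists X : nat -> nat -> nat -> R,
    (forall l, 1 <= l <= L -> is_factor (beta l) (X l)) /\
    (forall (i : 'I_m) (j : 'I_n), M i j = chain_prod beta X L i j).

Definition arch_of (L : nat) (p q r : nat -> nat) : nat -> pattern :=
  fun l => Pattern (\prod_(1 <= j < l) p j) (q l * r l.-1) (p l * r l)
                   (\prod_(l.+1 <= j < L.+1) q j).

(* Main.v *)
Require Import Defs.
From HB Require Import structures.
From mathcomp Require Import all_boot all_order all_algebra.
From mathcomp Require Import reals.
From mathcomp Require Import zify ring.
Import Order.TTheory GRing.Theory Num.Theory.



Definition Wd (beta : nat -> pattern) (k : nat) :=
  if k is 0 then nrows (beta 1) else ncols (beta k).

Lemma sum_nz (R : realType) n (F : 'I_n -> R) :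
  (\sum_i F i != 0)%R -> exists i, (F i != 0)%R.
Proof.
case: (pickP (fun i => F i != 0)%R) => [i Hi|H]; first by exists i.
by rewrite big1 ?eqxx // => i _; apply/eqP; move: (H i) => /negbFE.
Qed.

Lemma chain_nz (R : realType) beta (X : nat -> nat -> nat -> R) k i j :
  (chain_prod beta X k.+1 i j != 0)%R ->
  exists t : 'I_(nrows (beta k.+1)),
    (chain_prod beta X k i t != 0)%R /\ (X k.+1 t j != 0)%R.
Proof.
move=> /= /sum_nz [t]; rewrite mulf_eq0 negb_or => /andP[h1 h2].
by exists t.
Qed.

Lemma Wd_arch L beta : is_architecture L beta ->
  forall k, k < L -> Wd beta k = nrows (beta k.+1).
Proof.
case=> _ h [|k] hk //=. by apply: h; rewrite hk.
Qed.

Lemma mod_inv (R : realType) L beta (X : nat -> nat -> nat -> R) D :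
  (forall k, k < L -> Wd beta k = nrows (beta k.+1)) ->
  (forall l, 1 <= l <= L -> is_factor (beta l) (X l)) ->
  (forall l, 1 <= l <= L -> D %| pd (beta l)) ->
  forall k, k <= L -> forall i j, j < Wd beta k ->
  (chain_prod beta X k i j != 0)%R -> i %% D = j %% D.
Proof.
move=> hW hf hD; elim=> [|k IH] hk i j hj.
  by rewrite /=; case: (i =P j) => [->//|_]; rewrite mulr0n eqxx.
case/chain_nz=> t [h1 h2].
have hk1 : 1 <= k.+1 <= L by rewrite hk.
have := hf _ hk1 t j (ltn_ord t) hj h2.
rewrite /S_entry => /andP[_ /eqP e].
rewrite (IH (ltnW hk) i t) //; last by rewrite hW.
have hd := hD _ hk1.
by rewrite -(modn_dvdm t hd) e (modn_dvdm j hd).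
Qed.

Lemma div_inv (R : realType) L beta (X : nat -> nat -> nat -> R) (V E : nat -> nat) :
  (forall k, k < L -> Wd beta k = nrows (beta k.+1)) ->
  (forall l, 1 <= l <= L -> is_factor (beta l) (X l)) ->
  (forall k, k < L -> V k = pb (beta k.+1) * pd (beta k.+1) * E k.+1) ->
  (forall k, 0 < k <= L -> V k = pc (beta k) * pd (beta k) * E k) ->
  forall k, k <= L -> forall i j, j < Wd beta k ->
  (chain_prod beta X k i j != 0)%R -> i %/ V 0 = j %/ V k.
Proof.
move=> hW hf hV0 hV1; elim=> [|k IH] hk i j hj.
  by rewrite /=; case: (i =P j) => [->//|_]; rewrite mulr0n eqxx.
case/chain_nz=> t [h1 h2].
have hk1 : 1 <= k.+1 <= L by rewrite hk.
have := hf _ hk1 t j (ltn_ord t) hj h2.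
rewrite /S_entry => /andP[/eqP e _].
rewrite (IH (ltnW hk) i t) //; last by rewrite hW.
by rewrite hV0 // hV1 // [in LHS]divnMA e -divnMA.
Qed.



Lemma chain_get {p p'} : chainable_pair p p' -> pa p %| pa p' /\ pd p' %| pd p.
Proof. by case=> r [_ [_ [h1 h2]]]. Qed.

Lemma dvd_a L beta : chainable_arch L beta ->
  forall l, 1 <= l <= L -> pa (beta 1) %| pa (beta l).
Proof.
move=> hc; elim=> [//|l IH] /andP[_ hl].
case: l IH hl => [//|l] IH hl.
apply: dvdn_trans (IH _) _; first by rewrite /= ltnW.
by case: (chain_get (hc l.+1 _)) => //; rewrite /= ltnW.
Qed.

Lemma dvd_d L beta : chainable_arch L beta ->
  forall l, 1 <= l <= L -> pd (beta L) %| pd (beta l).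
Proof.
move=> hc.
suff H : forall k, k < L -> pd (beta L) %| pd (beta (L - k)).
  move=> l /andP[h1 h2]. have := H (L - l). rewrite subKn //. apply. lia.
elim=> [|k IH] hk; first by rewrite subn0.
apply: dvdn_trans (IH (ltnW hk)) _.
have e : L - k = (L - k.+1).+1 by lia.
rewrite e; case: (chain_get (hc (L - k.+1) _)) => //; lia.
Qed.

Lemma dL_eq1 (R : realType) L beta m n : 1 <= L -> is_architecture L beta ->
  chainable_arch L beta -> nrows (beta 1) = m -> ncols (beta L) = n -> 2 <= n ->
  (exists M : 'M[R]_(m, n), in_B L beta M /\ forall i j, M i j != 0%R) ->
  pd (beta L) = 1.
Proof.
move=> hL ha hc hm hn h2 [M [[X [hf hM]] hnz]].
have hp1 : pos_pattern (beta 1) by case: ha => h _; apply: h; rewrite leqnn hL.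
have hm0 : 0 < m by rewrite -hm /nrows; case/and4P: hp1 => *; rewrite !muln_gt0; apply/andP; split; [apply/andP; split|].
have := @mod_inv R L beta X (pd (beta L)) (@Wd_arch L beta ha) hf (@dvd_d L beta hc) L (leqnn _) 0 1.
have hn1 : 1 < n by [].
have := hnz (Ordinal hm0) (Ordinal hn1); rewrite hM /= => h.
case: L hL ha hc hm hn hf hM h => [//|L'] _ ha hc hm hn hf hM h.
rewrite /Wd hn => /(_ hn1 h).
rewrite mod0n => e; by apply/eqP; rewrite -dvdn1 /dvdn -e.
Qed.

Lemma pos_of L beta l : is_architecture L beta -> 1 <= l <= L ->
  [/\ 0 < pa (beta l), 0 < pb (beta l), 0 < pc (beta l) & 0 < pd (beta l)].
Proof. by case=> h _ /h /and4P[]. Qed.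

Lemma a1_eq1 (R : realType) L beta m n : 1 <= L -> is_architecture L beta ->
  chainable_arch L beta -> nrows (beta 1) = m -> ncols (beta L) = n -> 2 <= n ->
  (exists M : 'M[R]_(m, n), in_B L beta M /\ forall i j, M i j != 0%R) ->
  pa (beta 1) = 1.
Proof.
move=> hL ha hc hm hn h2 [M [[X [hf hM]] hnz]].
have h1L : 1 <= 1 <= L by rewrite leqnn hL.
have [a1p b1p c1p d1p] := @pos_of L beta 1 ha h1L.
have hm0 : 0 < m by rewrite -hm /nrows; rewrite !muln_gt0 a1p b1p d1p.
set a1 := pa (beta 1).
have [E hE] : exists E : nat -> nat, forall l, 1 <= l <= L -> pa (beta l) = E l * a1.
  by exists (fun l => pa (beta l) %/ a1) => l hl; rewrite divnK //; apply: (@dvd_a L beta hc l hl).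
pose V k := if k is 0 then pb (beta 1) * pd (beta 1) * E 1
            else pc (beta k) * pd (beta k) * E k.
have hV1 : forall k, 0 < k <= L -> V k = pc (beta k) * pd (beta k) * E k.
  by case.
have hV0 : forall k, k < L -> V k = pb (beta k.+1) * pd (beta k.+1) * E k.+1.
  case=> [//|k] hk /=.
  have e : ncols (beta k.+1) = nrows (beta k.+2) by case: ha => _ ->; rewrite ?hk.
  have hk1 : 1 <= k.+1 <= L by apply/andP; split => //; apply: ltnW.
  have hk2 : 1 <= k.+2 <= L by apply/andP; split.
  move: e; rewrite /nrows /ncols (hE k.+1 hk1) (hE k.+2 hk2).
  move=> e; apply/eqP; rewrite -(eqn_pmul2l a1p); apply/eqP.
  transitivity (E k.+1 * a1 * pc (beta k.+1) * pd (beta k.+1)); first ring.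
  rewrite e; ring.
have hn1 : n.-1 < n by rewrite prednK // ltnW.
have := @div_inv R L beta X V E (@Wd_arch L beta ha) hf hV0 hV1 L (leqnn _) 0 n.-1.
have := hnz (Ordinal hm0) (Ordinal hn1); rewrite hM /= => h.
case: L hL ha hc hm hn hf hM h hE hV0 hV1 h1L => [//|L'] _ ha hc hm hn hf hM h hE hV0 hV1 h1L.
rewrite /Wd hn => /(_ hn1 h).
rewrite div0n hV1 ?leqnn // => /esym/eqP.
have hLL : 1 <= L'.+1 <= L'.+1 by rewrite leqnn.
have [aLp bLp cLp dLp] := @pos_of L'.+1 beta L'.+1 ha hLL.
have Ep : 0 < E L'.+1.
  by move: aLp; rewrite hE // muln_gt0 => /andP[].
move: hn; rewrite /ncols (hE _ hLL).
have Wp : 0 < pc (beta L'.+1) * pd (beta L'.+1) * E L'.+1 by rewrite !muln_gt0 cLp dLp Ep.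
move=> hn2 /eqP hd.
have : n.-1 < pc (beta L'.+1) * pd (beta L'.+1) * E L'.+1.
  by rewrite -[X in _ < X]mul1n -ltn_divLR // hd.
move=> hlt.
apply/eqP; rewrite eqn_leq a1p andbT; nia.
Qed.



Lemma chain_facts L beta l : is_architecture L beta -> chainable_arch L beta ->
  1 <= l < L ->
  [/\ pa (beta l) * pc (beta l) = Defs.ratio (beta l) (beta l.+1) * pa (beta l.+1),
      pb (beta l.+1) * pd (beta l.+1) = Defs.ratio (beta l) (beta l.+1) * pd (beta l),
      pa (beta l) %| pa (beta l.+1) & pd (beta l.+1) %| pd (beta l)].
Proof.
move=> ha hc hl; case: (hc l hl) => rr [e1 [e2 [d1 d2]]].
have hl1 : 1 <= l.+1 <= L by move/andP: hl => [_ ->].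
have [ap _ _ _] := @pos_of L beta l.+1 ha hl1.
have -> : Defs.ratio (beta l) (beta l.+1) = rr by rewrite /Defs.ratio e1 mulnK.
by split.
Qed.

Lemma direct_part L beta m n : 1 <= L -> is_architecture L beta ->
  chainable_arch L beta -> nrows (beta 1) = m -> ncols (beta L) = n ->
  pa (beta 1) = 1 -> pd (beta L) = 1 ->
     exists (p q r : nat -> nat),
       (forall l, 1 <= l <= L -> 0 < p l /\ 0 < q l) /\
       (forall l, 1 <= l < L -> 0 < r l) /\ r 0 = 1 /\ r L = 1 /\
       m = \prod_(1 <= l < L.+1) q l /\ n = \prod_(1 <= l < L.+1) p l /\
       (forall l, 1 <= l <= L ->
          [/\ pa (beta l) = \prod_(1 <= j < l) p j,
              pd (beta l) = \prod_(l.+1 <= j < L.+1) q j,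
              pb (beta l) = q l * r l.-1 &
              pc (beta l) = p l * r l]).
Proof.
move=> hL ha hc hm hn a1 dL.
have [p [hp hpL]] : exists p : nat -> nat,
   (forall l, l < L -> p l = pa (beta l.+1) %/ pa (beta l)) /\ p L = pc (beta L).
  exists (fun l => if l < L then pa (beta l.+1) %/ pa (beta l) else pc (beta L)).
  by split => [l ->|]; rewrite ?ltnn.
have [q [hq1 hq]] : exists q : nat -> nat,
   q 1 = pb (beta 1) /\ (forall l, 1 < l -> q l = pd (beta l.-1) %/ pd (beta l)).
  exists (fun l => if l == 1 then pb (beta 1) else pd (beta l.-1) %/ pd (beta l)).
  by split => // [[|[|l]]].
have [r [hr0 [hrL hr]]] : exists r : nat -> nat, r 0 = 1 /\ r L = 1 /\
   (forall l, 1 <= l < L -> r l = Defs.ratio (beta l) (beta l.+1)).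
  exists (fun l => if 1 <= l < L then Defs.ratio (beta l) (beta l.+1) else 1).
  by split => //; split => [|l ->]; rewrite ?ltnn ?andbF.
have hA : forall l, 1 <= l <= L -> pa (beta l) = \prod_(1 <= j < l) p j.
  elim=> [//|l IH] /andP[_ hl].
  case: l IH hl => [|l] IH hl; first by rewrite a1 big_geq.
  rewrite big_nat_recr //= -IH; last by apply/andP; split => //; apply: ltnW.
  have [_ _ hd _] := @chain_facts L beta l.+1 ha hc hl.
  by rewrite hp // mulnC divnK.
have hD : forall l, 1 <= l <= L -> pd (beta l) = \prod_(l.+1 <= j < L.+1) q j.
  suff H : forall k, k < L -> pd (beta (L - k)) = \prod_((L - k).+1 <= j < L.+1) q j.
    move=> l /andP[h1 h2]. have := H (L - l). rewrite subKn //. apply. lia.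
  elim=> [|k IH] hk; first by rewrite subn0 dL big_geq.
  have e : L - k = (L - k.+1).+1 by lia.
  have hl : 1 <= L - k.+1 < L by lia.
  have [_ _ _ hd] := @chain_facts L beta (L - k.+1) ha hc hl.
  rewrite big_ltn; last by lia.
  rewrite -e -(IH (ltnW hk)) hq; last by lia.
  by rewrite e /= divnK.
have hB : forall l, 1 <= l <= L -> pb (beta l) = q l * r l.-1.
  move=> [//|[|l]] hl; first by rewrite hq1 hr0 muln1.
  have hl' : 1 <= l.+1 < L by lia.
  have [_ e2 _ hd] := @chain_facts L beta l.+1 ha hc hl'.
  have [_ _ _ dp] := @pos_of L beta l.+2 ha hl.
  rewrite hq // hr //=.
  apply/eqP; rewrite -(eqn_pmul2r dp); apply/eqP.
  rewrite e2 -{1}(divnK hd); ring.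
have hC : forall l, 1 <= l <= L -> pc (beta l) = p l * r l.
  move=> l hl; case: (ltnP l L) => hlL.
    have hl' : 1 <= l < L by move/andP: hl => [-> _].
    have [e1 _ hd _] := @chain_facts L beta l ha hc hl'.
    have [ap _ _ _] := @pos_of L beta l ha hl.
    rewrite hp // hr //.
    apply/eqP; rewrite -(eqn_pmul2l ap); apply/eqP.
    rewrite e1 -{1}(divnK hd); ring.
  have -> : l = L by move/andP: hl => [_ h]; apply/eqP; rewrite eqn_leq h.
  by rewrite hpL hrL muln1.
exists p, q, r; split; last split; last split => //; last split => //.
- move=> l hl; have [_ bp cp _] := @pos_of L beta l ha hl.
  move: bp cp; rewrite hB // hC // !muln_gt0 => /andP[-> _] /andP[-> _] //.
- move=> l hl.
  have hl' : 1 <= l <= L by move/andP: hl => [-> /ltnW].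
  have [_ _ cp _] := @pos_of L beta l ha hl'.
  by move: cp; rewrite hC // muln_gt0 => /andP[_ ->].
have hLL : 1 <= L <= L by rewrite hL leqnn.
have h1L : 1 <= 1 <= L by rewrite hL leqnn.
split; last split => //.
- rewrite -hm /nrows a1 mul1n hD // -hq1 -big_ltn //.
- rewrite -hn /ncols hA // dL muln1 -hpL -big_nat_recr //.
- move=> l hl; split; auto.
Qed.



Lemma prod_pos L a b (F : nat -> nat) : 1 <= a -> b <= L.+1 ->
  (forall l, 1 <= l <= L -> 0 < F l) -> 0 < \prod_(a <= j < b) F j.
Proof.
move=> ha hb hF; rewrite big_nat_cond; apply: prodn_cond_gt0 => j /andP[/andP[h1 h2] _].
apply: hF; lia.
Qed.

Lemma conv_arch L (p q r : nat -> nat) : 1 <= L ->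
  (forall l, 1 <= l <= L -> 0 < p l /\ 0 < q l) ->
  (forall l, 1 <= l < L -> 0 < r l) -> r 0 = 1 -> r L = 1 ->
  is_architecture L (arch_of L p q r) /\ chainable_arch L (arch_of L p q r).
Proof.
move=> hL hpq hr hr0 hrL.
have hp : forall l, 1 <= l <= L -> 0 < p l by move=> l /hpq[].
have hq : forall l, 1 <= l <= L -> 0 < q l by move=> l /hpq[].
have hr' : forall l, l <= L -> 0 < r l.
  move=> [|l] hl; first by rewrite hr0.
  case: (ltnP l.+1 L) => h; first by apply: hr; rewrite h.
  have -> : l.+1 = L by lia.
  by rewrite hrL.
split; first split.
- move=> l hl; rewrite /pos_pattern /arch_of /=.
  have h1 : 1 <= 1 by [].
  have hlL : l <= L.+1 by lia.
  rewrite (@prod_pos L 1 l p h1 hlL hp) (@prod_pos L l.+1 L.+1 q (ltn0Sn _) (leqnn _) hq).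
  move/andP: hl => [hl1 hl2].
  rewrite !muln_gt0 hp ?hl1 // hq ?hl1 // !hr' //; lia.
- move=> l hl; rewrite /ncols /nrows /arch_of /=.
  rewrite [\prod_(1 <= j < l.+1) p j]big_nat_recr /=; last by lia.
  rewrite [\prod_(l.+1 <= j < L.+1) q j]big_ltn; last by lia.
  ring.
- move=> l hl; rewrite /chainable_pair /arch_of /=.
  exists (r l).
  rewrite [\prod_(1 <= j < l.+1) p j]big_nat_recr /=; last by lia.
  rewrite [\prod_(l.+1 <= j < L.+1) q j]big_ltn; last by lia.
  split; first ring. split; first ring.
  by split; [apply: dvdn_mulr | apply: dvdn_mull].
Qed.



Lemma chain_ge0 (R : realType) beta (X : nat -> nat -> nat -> R) :
  (forall l i j, 0 <= X l i j)%R -> forall k i j, (0 <= chain_prod beta X k i j)%R.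
Proof.
move=> hX; elim=> [|k IH] i j /=; first exact: ler0n.
by apply: sumr_ge0 => t _; apply: mulr_ge0.
Qed.

Definition SX (R : realType) beta (l i j : nat) : R := ((S_entry (beta l) i j)%:R)%R.

Lemma nrows1 L (p q r : nat -> nat) : 1 <= L -> r 0 = 1 ->
  nrows (arch_of L p q r 1) = \prod_(1 <= l < L.+1) q l.
Proof.
move=> hL hr0; rewrite /nrows /arch_of /= big_geq // hr0 mul1n muln1.
by rewrite [in RHS]big_ltn.
Qed.

Lemma pos_inv (R : realType) L (p q r : nat -> nat) : 1 <= L ->
  (forall l, 1 <= l <= L -> 0 < p l /\ 0 < q l) ->
  (forall l, 1 <= l < L -> 0 < r l) -> r 0 = 1 -> r L = 1 ->
  forall k, k <= L -> forall i j, i < \prod_(1 <= l < L.+1) q l ->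
    j < Wd (arch_of L p q r) k ->
    i %% \prod_(k.+1 <= l < L.+1) q l = j %% \prod_(k.+1 <= l < L.+1) q l ->
    (0 < chain_prod (arch_of L p q r) (SX R (arch_of L p q r)) k i j)%R.
Proof.
move=> hL hpq hr hr0 hrL.
have [ha hc] := @conv_arch L p q r hL hpq hr hr0 hrL.
have hp : forall l, 1 <= l <= L -> 0 < p l by move=> l /hpq[].
have hq : forall l, 1 <= l <= L -> 0 < q l by move=> l /hpq[].
have hr' : forall l, l <= L -> 0 < r l.
  move=> [|l] hl; first by rewrite hr0.
  case: (ltnP l.+1 L) => h; first by apply: hr; rewrite h.
  have -> : l.+1 = L by lia.
  by rewrite hrL.
elim=> [|k IH] hk i j hi hj.
  rewrite /= in hj; rewrite nrows1 // in hj.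
  rewrite !modn_small // => ->.
  by rewrite /= eqxx ltr01.
set beta := arch_of L p q r.
have hWk : Wd beta k = nrows (beta k.+1) by apply: (@Wd_arch L beta ha).
have hD : \prod_(k.+1 <= l < L.+1) q l = q k.+1 * \prod_(k.+2 <= l < L.+1) q l.
  by rewrite big_ltn //; lia.
set D := \prod_(k.+2 <= l < L.+1) q l in hD *.
have hk1 : 1 <= k.+1 <= L by lia.
have Dp : 0 < D by rewrite /D (@prod_pos L k.+2 L.+1 q (ltn0Sn _) (leqnn _) hq).
have qp : 0 < q k.+1 by apply: hq.
have rkp : 0 < r k by apply: hr'; lia.
have rk1p : 0 < r k.+1 by apply: hr'; lia.
have pp : 0 < p k.+1 by apply: hp.
set A := \prod_(1 <= l < k.+1) p l.
move: hj; rewrite /= /ncols /= -/A -/D => hj.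
move=> hij.
set c := p k.+1 * r k.+1.
set bq := q k.+1 * r k.
have cDp : 0 < c * D by rewrite !muln_gt0 pp rk1p Dp.
have bDp : 0 < bq * D by rewrite !muln_gt0 qp rkp Dp.
set J := j %/ (c * D).
set s := i %% (q k.+1 * D).
have hs : s < q k.+1 * D by rewrite /s ltn_mod muln_gt0 qp Dp.
have hs' : s < bq * D.
  apply: (leq_trans hs); rewrite /bq -mulnA leq_pmul2l // -{1}[D]mul1n leq_pmul2r //.
have hJ : J < A by rewrite /J ltn_divLR // /c mulnA.
have ht : J * (bq * D) + s < nrows (beta k.+1).
  rewrite /nrows /= -/A -/D -/bq.
  apply: (@leq_trans (J.+1 * (bq * D))); first by rewrite mulSn [_ + s]addnC ltn_add2r.
  by rewrite -mulnA leq_pmul2r.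
rewrite /= (bigD1 (Ordinal ht)) //=.
apply: ltr_pwDl; last first.
  by apply: sumr_ge0 => t _; apply: mulr_ge0; [apply: chain_ge0 => *; apply: ler0n | apply: ler0n].
apply: mulr_gt0.
  apply: IH; first lia.
  - exact: hi.
  - by rewrite hWk.
  rewrite hD -/s.
  have -> : J * (bq * D) + s = (J * r k) * (q k.+1 * D) + s by rewrite /bq; ring.
  by rewrite modnMDl modn_mod.
rewrite /SX /S_entry /= -/A -/D -/bq -/c.
have -> : (J * (bq * D) + s) %/ (bq * D) = J by rewrite divnMDl // divn_small ?addn0.
rewrite eqxx /=.
have -> : (J * (bq * D) + s) %% D = s %% D.
  have -> : J * (bq * D) + s = (J * bq) * D + s by ring.
  by rewrite modnMDl.
have hdv : D %| q k.+1 * D by apply: dvdn_mull.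
by rewrite /s (modn_dvdm _ hdv) hij eqxx ltr01.
Qed.



Lemma ratio_eq L (p q r : nat -> nat) l : 1 <= l < L ->
  (forall l, 1 <= l <= L -> 0 < p l /\ 0 < q l) ->
  Defs.ratio (arch_of L p q r l) (arch_of L p q r l.+1) = r l.
Proof.
move=> hl hpq.
have hp : forall l, 1 <= l <= L -> 0 < p l by move=> l' /hpq[].
rewrite /Defs.ratio /arch_of /= big_nat_recr /=; last by lia.
have h1 : 1 <= 1 by [].
have hlL : l <= L.+1 by lia.
have Ap := @prod_pos L 1 l p h1 hlL hp.
have pl : 0 < p l by apply: hp; lia.
by rewrite mulnA mulKn // muln_gt0 Ap pl.
Qed.

Lemma nonred_iff L (p q r : nat -> nat) : 1 <= L ->
  (forall l, 1 <= l <= L -> 0 < p l /\ 0 < q l) ->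
  (forall l, 1 <= l < L -> 0 < r l) -> r 0 = 1 -> r L = 1 ->
  (~ redundant_arch L (arch_of L p q r) <->
   forall l, 1 <= l < L -> r l < q l * r l.-1 /\ r l < p l.+1 * r l.+1).
Proof.
move=> hL hpq hr hr0 hrL.
have [ha hc] := @conv_arch L p q r hL hpq hr hr0 hrL.
split.
- move=> H l hl.
  have e := @ratio_eq L p q r l hl hpq.
  suff : r l < minn (q l * r l.-1) (p l.+1 * r l.+1).
    by rewrite leq_min => /andP[].
  rewrite ltnNge; apply/negP => h; apply: H; split => //.
  exists l; split => //; split; first exact: hc.
  by rewrite e.
- move=> H [_ [l [hl [_ h]]]].
  move: h; rewrite (@ratio_eq L p q r l hl hpq) geq_min /=.
  have [h1 h2] := H l hl.
  by case/orP => h; [move: h1 | move: h2]; rewrite ltnNge h.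
Qed.

Lemma rat_conds (a b x : nat) : 0 < a -> 0 < b -> 0 < x ->
  ((1 / x%:R < b%:R / a%:R :> rat)%R <-> a < x * b) /\
  ((b%:R / a%:R < x%:R :> rat)%R <-> b < x * a).
Proof.
move=> ap bp xp.
have ap' : (0 < a%:R :> rat)%R by rewrite ltr0n.
have xp' : (0 < x%:R :> rat)%R by rewrite ltr0n.
split.
  by rewrite ltr_pdivlMr // mul1r ltr_pdivrMl // -natrM ltr_nat.
by rewrite ltr_pdivrMr // -natrM ltr_nat.
Qed.



Theorem lemma4p16 (R : realType) (m n L : nat) :
  2 <= m -> 2 <= n -> 2 <= L ->
  (* direct part *)
  (forall beta : nat -> pattern,
     is_architecture L beta -> chainable_arch L beta ->
     nrows (beta 1) = m -> ncols (beta L) = n ->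
     (exists M : 'M[R]_(m, n), in_B L beta M /\ forall i j, M i j != 0%R) ->
     exists (p q r : nat -> nat),
       (forall l, 1 <= l <= L -> 0 < p l /\ 0 < q l) /\
       (forall l, 1 <= l < L -> 0 < r l) /\ r 0 = 1 /\ r L = 1 /\
       m = \prod_(1 <= l < L.+1) q l /\ n = \prod_(1 <= l < L.+1) p l /\
       (forall l, 1 <= l <= L ->
          [/\ pa (beta l) = \prod_(1 <= j < l) p j,
              pd (beta l) = \prod_(l.+1 <= j < L.+1) q j,
              pb (beta l) = q l * r l.-1 &
              pc (beta l) = p l * r l])) /\
  (* converse part *)
  (forall p q r : nat -> nat,
     (forall l, 1 <= l <= L -> 0 < p l /\ 0 < q l) ->
     (forall l, 1 <= l < L -> 0 < r l) -> r 0 = 1 -> r L = 1 ->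
     n = \prod_(1 <= l < L.+1) p l -> m = \prod_(1 <= l < L.+1) q l ->
     let beta := arch_of L p q r in
     [/\ is_architecture L beta /\ chainable_arch L beta,
         nrows (beta 1) = m, ncols (beta L) = n,
         (exists M : 'M[R]_(m, n), in_B L beta M /\ forall i j, M i j != 0%R) &
         (~ redundant_arch L beta <->
            [/\ r 1 < q 1, r L.-1 < p L &
                forall l, 2 <= l <= L.-1 ->
                  (1 / (p l)%:R < (r l)%:R / (r l.-1)%:R :> rat)%R /\
                  ((r l)%:R / (r l.-1)%:R < (q l)%:R :> rat)%R])]).
Proof.
move=> hm hn hL; have hL1 : 1 <= L by lia.
split.
  move=> beta ha hc hm1 hnL hM.
  have a1 := @a1_eq1 R L beta m n hL1 ha hc hm1 hnL hn hM.
  have dL := @dL_eq1 R L beta m n hL1 ha hc hm1 hnL hn hM.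
  exact: (@direct_part L beta m n hL1 ha hc hm1 hnL a1 dL).
move=> p q r hpq hr hr0 hrL hn' hm' beta.
have [ha hc] := @conv_arch L p q r hL1 hpq hr hr0 hrL.
have hp : forall l, 1 <= l <= L -> 0 < p l by move=> l /hpq[].
have hq : forall l, 1 <= l <= L -> 0 < q l by move=> l /hpq[].
have hncol : ncols (beta L) = n.
  rewrite /beta /ncols /arch_of /= [\prod_(L.+1 <= j < L.+1) q j]big_geq // hrL !muln1 hn'.
  by rewrite [in RHS]big_nat_recr //=.
split.
- by split.
- by rewrite /beta nrows1.
- exact: hncol.
- exists (\matrix_(i < m, j < n) chain_prod beta (SX R beta) L i j)%R; split.
    exists (SX R beta); split.
      move=> l hl i j _ _; rewrite /SX.
      by case: S_entry => //; rewrite mulr0n eqxx.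
    by move=> i j; rewrite mxE.
  move=> i j; rewrite mxE.
  apply: lt0r_neq0.
  apply: (@pos_inv R L p q r hL1 hpq hr hr0 hrL L (leqnn _)).
  + by rewrite -hm'.
  + have -> : Wd beta L = ncols (beta L) by case: (L) hL.
    by rewrite hncol.
  + by rewrite big_geq // !modn1.
rewrite (@nonred_iff L p q r hL1 hpq hr hr0 hrL).
have hr' : forall l, l <= L -> 0 < r l.
  move=> [|l] hl; first by rewrite hr0.
  case: (ltnP l.+1 L) => h; first by apply: hr; rewrite h.
  have -> : l.+1 = L by lia.
  by rewrite hrL.
have hmid : forall l, 2 <= l <= L.-1 ->
  ((1 / (p l)%:R < (r l)%:R / (r l.-1)%:R :> rat)%R <-> r l.-1 < p l * r l) /\
  (((r l)%:R / (r l.-1)%:R < (q l)%:R :> rat)%R <-> r l < q l * r l.-1).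
  move=> l hl.
  have ha' : 0 < r l.-1 by apply: hr'; lia.
  have hb' : 0 < r l by apply: hr'; lia.
  have hx : 0 < p l by apply: hp; lia.
  have hy : 0 < q l by apply: hq; lia.
  by split; [exact: (proj1 (@rat_conds _ _ _ ha' hb' hx)) | exact: (proj2 (@rat_conds _ _ _ ha' hb' hy))].
split.
- move=> H; split.
  + have [h _] := H 1 hL.
    by move: h; rewrite hr0 muln1.
  + have hl : 1 <= L.-1 < L by lia.
    have [_ h] := H _ hl.
    by move: h; rewrite prednK ?hrL ?muln1 //; lia.
  + move=> l hl; have [e1 e2] := hmid l hl; rewrite e1 e2.
    have hl1 : 1 <= l.-1 < L by lia.
    have hl2 : 1 <= l < L by lia.
    have [_ h1] := H _ hl1.
    have [h2 _] := H _ hl2.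
    by move: h1; rewrite prednK //; lia.
- case=> h1 h2 h3 l hl; split.
  + case: (ltnP 1 l) => hl1.
      have hl' : 2 <= l <= L.-1 by lia.
      by have [_ e2] := hmid l hl'; apply/e2; case: (h3 l hl').
    have -> : l = 1 by lia.
    by rewrite hr0 muln1.
  + case: (ltnP l.+1 L) => hl1.
      have hl' : 2 <= l.+1 <= L.-1 by lia.
      by have [e1 _] := hmid l.+1 hl'; move/e1: (proj1 (h3 l.+1 hl')).
    have -> : l = L.-1 by lia.
    by rewrite prednK ?hrL ?muln1 //; lia.
Qed.
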